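(* Let $(W,S)$ be a Coxeter system with length function $\ell$ and Bruhat order $\le$. Let $x,y\in W$ and $s,t\in S$ be such that $y=sxt$ and $\ell(x)=\ell(y)$. If $x'\in W$ satisfies $x'\le x$, then either $x'\le y$, or $sx't\le y$ with $\ell(sx't)\le \ell(x')$.
   Context: Standard notions: Coxeter system, length function, Bruhat order. *)

(* Defs.v *)
From Stdlib Require Import List Relations ClassicalEpsilon.
Import ListNotations.

Record Group := {
  carrier :> Type;
  gmul : carrier -> carrier -> carrier;
  gone : carrier;
  ginv : carrier -> carrier;
  gmul_assoc : forall a b c, gmul a (gmul b c) = gmul (gmul a b) c;
  gmul_1l : forall a, gmul gone a = a;
  gmul_1r : forall a, gmul a gone = a;
  gmul_Vl : forall a, gmul (ginv a) a = gone;
  gmul_Vr : forall a, gmul a (ginv a) = gone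
}.

Arguments gmul {g} _ _.
Arguments gone {g}.
Arguments ginv {g} _.

Fixpoint gpow {G : Group} (g : G) (n : nat) : G :=
  match n with 0 => gone | S k => gmul g (gpow g k) end.

Fixpoint wprod {G : Group} (l : list G) : G :=
  match l with [] => gone | a :: l' => gmul a (wprod l') end.

(* (W,S) is a Coxeter system: S consists of involutions, S generates W, and
   W has the presentation < S | (s t)^{m(s,t)} = 1 > where m(s,t) is the order
   of s t in W (possibly infinite, i.e. no relation).  The presentation is
   expressed by the universal property: every map f from S into a group G
   respecting all relations (s t)^n = 1 valid in W extends to a homomorphism
   W -> G. *)
Definition coxeter_system (W : Group) (S : W -> Prop) : Prop :=
  (forall s, S s -> s <> gone /\ gmul s s = gone) /\
  (forall w : W, exists l : list W, Forall S l /\ wprod l = w) /\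
  (forall (G : Group) (f : W -> G),
     (forall s t n, S s -> S t -> gpow (gmul s t) n = gone ->
                    gpow (gmul (f s) (f t)) n = gone) ->
     exists phi : W -> G,
       (forall a b, phi (gmul a b) = gmul (phi a) (phi b)) /\
       (forall s, S s -> phi s = f s)).

Definition has_word (W : Group) (S : W -> Prop) (w : W) (n : nat) : Prop :=
  exists l : list W, Forall S l /\ wprod l = w /\ length l = n.

Definition coxlen (W : Group) (S : W -> Prop) (w : W) : nat :=
  epsilon (inhabits 0)
    (fun n => has_word W S w n /\ forall m, has_word W S w m -> n <= m).

Definition reflection (W : Group) (S : W -> Prop) (r : W) : Prop :=
  exists w s, S s /\ r = gmul (gmul w s) (ginv w).

Definition bruhat_step (W : Group) (S : W -> Prop) (u v : W) : Prop :=
  exists r, reflection W S r /\ v = gmul u r /\ coxlen W S u < coxlen W S v.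

Definition bruhat (W : Group) (S : W -> Prop) : relation W :=
  clos_refl_trans W (bruhat_step W S).

(* Main.v *)
Require Import Defs.
From Stdlib Require Import List Relations ClassicalEpsilon Classical Lia Arith FunctionalExtensionality Bool.
Import ListNotations.

Infix "**" := gmul (at level 40, left associativity).

Lemma mul_cancel_l (G : Group) (a b c : G) : a ** b = a ** c -> b = c.
Proof. intro H. rewrite <- (gmul_1l G b), <- (gmul_1l G c), <- (gmul_Vl G a), <- !gmul_assoc, H. reflexivity. Qed.

Lemma mul_cancel_r (G : Group) (a b c : G) : b ** a = c ** a -> b = c.
Proof. intro H. rewrite <- (gmul_1r G b), <- (gmul_1r G c), <- (gmul_Vr G a), !gmul_assoc, H. reflexivity. Qed.

Lemma inv_uniq (G : Group) (a b : G) : a ** b = gone -> ginv a = b.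
Proof. intro H. apply (mul_cancel_l G a). rewrite gmul_Vr. auto. Qed.

Lemma inv_inv (G : Group) (a : G) : ginv (ginv a) = a.
Proof. apply inv_uniq. apply gmul_Vl. Qed.

Lemma inv_mul (G : Group) (a b : G) : ginv (a ** b) = ginv b ** ginv a.
Proof. apply inv_uniq. rewrite gmul_assoc, <- (gmul_assoc G a b), gmul_Vr, gmul_1r, gmul_Vr. auto. Qed.

Lemma inv_one (G : Group) : ginv (@gone G) = gone.
Proof. apply inv_uniq. apply gmul_1l. Qed.

Lemma inv_invol (G : Group) (a : G) : a ** a = gone -> ginv a = a.
Proof. apply inv_uniq. Qed.

Lemma mulKl (G : Group) (a b : G) : ginv a ** (a ** b) = b.
Proof. rewrite gmul_assoc, gmul_Vl, gmul_1l. auto. Qed.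
Lemma mulKr (G : Group) (a b : G) : a ** (ginv a ** b) = b.
Proof. rewrite gmul_assoc, gmul_Vr, gmul_1l. auto. Qed.
Lemma mulKl' (G : Group) (a b : G) : (b ** a) ** ginv a = b.
Proof. rewrite <- gmul_assoc, gmul_Vr, gmul_1r. auto. Qed.
Lemma mulKr' (G : Group) (a b : G) : (b ** ginv a) ** a = b.
Proof. rewrite <- gmul_assoc, gmul_Vl, gmul_1r. auto. Qed.

Lemma wprod_app (G : Group) (l1 l2 : list G) : wprod (l1 ++ l2) = wprod l1 ** wprod l2.
Proof. induction l1; simpl. rewrite gmul_1l; auto. rewrite IHl1, gmul_assoc; auto. Qed.

Lemma gpow_S_r (G : Group) (g : G) n : gpow g (S n) = gpow g n ** g.
Proof. induction n; simpl. rewrite gmul_1l, gmul_1r; auto.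
 simpl in IHn. rewrite IHn at 1. rewrite gmul_assoc. auto. Qed.

Lemma gpow_add (G : Group) (g : G) a b : gpow g (a + b) = gpow g a ** gpow g b.
Proof. induction a; simpl. rewrite gmul_1l; auto. rewrite IHa, gmul_assoc; auto. Qed.

Lemma gpow_inv (G : Group) (g : G) n : gpow (ginv g) n = ginv (gpow g n).
Proof. induction n; simpl. rewrite inv_one; auto.
  rewrite IHn. transitivity (ginv (gpow g n ** g)). rewrite inv_mul; auto.
  f_equal. rewrite <- gpow_S_r. reflexivity. Qed.

Lemma min_ex (P : nat -> Prop) n : P n -> exists k, P k /\ forall m, P m -> k <= m.
Proof.
  induction n as [n IH] using lt_wf_ind. intro Hn.
  destruct (classic (exists m, m < n /\ P m)) as [[m [Hm Pm]]|H].
  - apply (IH m Hm Pm).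
  - exists n; split; auto. intros m Pm. destruct (le_lt_dec n m); auto.
    exfalso; apply H; eauto.
Qed.

Lemma S_invol (W : Group) (S : W -> Prop) (HW : coxeter_system W S) s : S s -> s ** s = gone.
Proof. intro H. apply (proj1 HW s H). Qed.

Lemma coxlen_spec (W : Group) (S : W -> Prop) (HW : coxeter_system W S) w :
  has_word W S w (coxlen W S w) /\ forall m, has_word W S w m -> coxlen W S w <= m.
Proof.
  unfold coxlen. apply epsilon_spec.
  destruct HW as [_ [Hg _]]. destruct (Hg w) as [l [Hl Hw]].
  apply (min_ex _ (length l)). exists l; auto.
Qed.

Lemma len_le (W : Group) (S : W -> Prop) (HW : coxeter_system W S) l :
  Forall S l -> coxlen W S (wprod l) <= length l.
Proof. intro H. apply (proj2 (coxlen_spec W S HW _)). exists l; auto. Qed.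

Lemma len_word (W : Group) (S : W -> Prop) (HW : coxeter_system W S) w :
  exists l, Forall S l /\ wprod l = w /\ length l = coxlen W S w.
Proof. apply (proj1 (coxlen_spec W S HW w)). Qed.

Lemma len_Sl (W : Group) (S : W -> Prop) (HW : coxeter_system W S) s w :
  S s -> coxlen W S (s ** w) <= 1 + (coxlen W S w).
Proof.
  intro Hs. destruct (len_word W S HW w) as [l [Hl [Hw Hn]]].
  rewrite <- Hn. change (1 + length l) with (length (s :: l)).
  rewrite <- Hw. change (s ** wprod l) with (wprod (s :: l)). apply len_le; auto.
Qed.

Lemma len_Sr (W : Group) (S : W -> Prop) (HW : coxeter_system W S) s w :
  S s -> coxlen W S (w ** s) <= 1 + (coxlen W S w).
Proof.
  intro Hs. destruct (len_word W S HW w) as [l [Hl [Hw Hn]]].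
  rewrite <- Hn. replace (1 + length l) with (length (l ++ [s])) by (rewrite length_app; simpl; lia).
  replace (w ** s) with (wprod (l ++ [s])).
  apply len_le; auto. apply Forall_app; auto.
  rewrite wprod_app; simpl. rewrite gmul_1r, Hw. auto.
Qed.

Lemma len_Sl_ge (W : Group) (S : W -> Prop) (HW : coxeter_system W S) s w :
  S s -> coxlen W S w <= 1 + (coxlen W S (s ** w)).
Proof.
  intro Hs. pattern w at 1. replace w with (s ** (s ** w)).
  apply len_Sl; auto. rewrite gmul_assoc, (S_invol W S HW s Hs), gmul_1l; auto.
Qed.

Lemma len_Sr_ge (W : Group) (S : W -> Prop) (HW : coxeter_system W S) s w :
  S s -> coxlen W S w <= 1 + (coxlen W S (w ** s)).
Proof.
  intro Hs. pattern w at 1. replace w with ((w ** s) ** s).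
  apply len_Sr; auto. rewrite <- gmul_assoc, (S_invol W S HW s Hs), gmul_1r; auto.
Qed.

Lemma wprod_rev (W : Group) (S : W -> Prop) (HW : coxeter_system W S) l :
  Forall S l -> wprod (rev l) = ginv (wprod l).
Proof.
  induction 1; simpl. rewrite inv_one; auto.
  rewrite wprod_app, IHForall, inv_mul, (inv_invol W x (S_invol W S HW x H)). simpl.
  rewrite gmul_1r; auto.
Qed.

Lemma len_inv_le (W : Group) (S : W -> Prop) (HW : coxeter_system W S) w :
  coxlen W S (ginv w) <= coxlen W S w.
Proof.
  destruct (len_word W S HW w) as [l [Hl [Hw Hn]]].
  rewrite <- Hn, <- Hw, <- (wprod_rev W S HW l Hl). rewrite <- length_rev.
  apply (len_le W S HW). apply Forall_rev; auto.
Qed.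

Lemma len_inv (W : Group) (S : W -> Prop) (HW : coxeter_system W S) w :
  coxlen W S (ginv w) = coxlen W S w.
Proof.
  apply Nat.le_antisymm. apply len_inv_le; auto.
  rewrite <- (inv_inv W w) at 1. apply len_inv_le; auto.
Qed.

Definition BoolG : Group.
Proof.
  refine {| carrier := bool; gmul := xorb; gone := false; ginv := fun b => b |}.
  - intros; rewrite xorb_assoc; auto.
  - intros; apply xorb_false_l.
  - intros; apply xorb_false_r.
  - intros; apply xorb_nilpotent.
  - intros; apply xorb_nilpotent.
Defined.

Lemma parity_hom (W : Group) (S : W -> Prop) (HW : coxeter_system W S) :
  exists eps : W -> bool, (forall a b, eps (a ** b) = xorb (eps a) (eps b)) /\
    (forall s, S s -> eps s = true).
Proof.
  destruct HW as [_ [_ Hu]].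
  destruct (Hu BoolG (fun _ => true)) as [phi [H1 H2]].
  - intros s t n _ _ _. simpl. induction n; simpl; auto.
  - exists phi. split; auto.
Qed.

Lemma odd_len (W : Group) (S : W -> Prop) (HW : coxeter_system W S) :
  (forall a b, Nat.odd (coxlen W S (a ** b)) = xorb (Nat.odd (coxlen W S a)) (Nat.odd (coxlen W S b))).
Proof.
  destruct (parity_hom W S HW) as [eps [H1 H2]].
  assert (Hw : forall l, Forall S l -> eps (wprod l) = Nat.odd (length l)).
  { induction 1; simpl.
    - assert (E0 : eps gone = xorb (eps gone) (eps gone)) by (rewrite <- H1, gmul_1l; auto).
      rewrite xorb_nilpotent in E0; auto.
    - rewrite H1, IHForall, H2 by auto. rewrite Nat.odd_succ, <- Nat.negb_odd.
      destruct (Nat.odd (length l)); auto. }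
  assert (He : forall w, eps w = Nat.odd (coxlen W S w)).
  { intro w. destruct (len_word W S HW w) as [l [Hl [Hp Hn]]]. rewrite <- Hn, <- Hp. auto. }
  intros a b. rewrite <- !He. auto.
Qed.

Lemma odd_len_refl (W : Group) (S : W -> Prop) (HW : coxeter_system W S) r :
  reflection W S r -> Nat.odd (coxlen W S r) = true.
Proof.
  intros [w [s [Hs ->]]].
  assert (Hinv : xorb (Nat.odd (coxlen W S w)) (Nat.odd (coxlen W S (ginv w))) = false).
  { rewrite <- odd_len by auto. rewrite gmul_Vr.
    destruct (len_word W S HW gone) as [l [Hl [Hp Hn]]].
    assert (coxlen W S gone <= 0). { apply (len_le W S HW nil). auto. }
    replace (coxlen W S gone) with 0 by lia. auto. }
  rewrite !(odd_len W S HW).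
  assert (Nat.odd (coxlen W S s) = true).
  { destruct (len_word W S HW s) as [l [Hl [Hp Hn]]].
    assert (coxlen W S s <= 1). { replace s with (wprod [s]) at 1 by (simpl; apply gmul_1r).
      apply (len_le W S HW [s]); auto. }
    assert (coxlen W S s <> 0).
    { intro H0. rewrite H0 in Hn. destruct l; simpl in *; try discriminate.
      apply (proj1 (proj1 HW s Hs)). auto. }
    replace (coxlen W S s) with 1 by lia. auto. }
  rewrite H. destruct (Nat.odd (coxlen W S w)), (Nat.odd (coxlen W S (ginv w))); simpl in *; auto.
Qed.

Lemma len_neq_r (W : Group) (S : W -> Prop) (HW : coxeter_system W S) r u :
  reflection W S r -> coxlen W S (u ** r) <> coxlen W S u.
Proof.
  intros Hr H. pose proof (odd_len W S HW u r) as E. rewrite H, (odd_len_refl W S HW r Hr) in E.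
  destruct (Nat.odd (coxlen W S u)); discriminate.
Qed.

Lemma len_neq_l (W : Group) (S : W -> Prop) (HW : coxeter_system W S) r u :
  reflection W S r -> coxlen W S (r ** u) <> coxlen W S u.
Proof.
  intros Hr H. pose proof (odd_len W S HW r u) as E. rewrite H, (odd_len_refl W S HW r Hr) in E.
  destruct (Nat.odd (coxlen W S u)); discriminate.
Qed.

Lemma S_refl (W : Group) (S : W -> Prop) s : S s -> reflection W S s.
Proof. intro H. exists gone, s. split; auto. rewrite inv_one, gmul_1l, gmul_1r; auto. Qed.

Definition eqb_cl {A : Type} (a b : A) : bool :=
  if excluded_middle_informative (a = b) then true else false.

Lemma eqb_cl_spec {A : Type} (a b : A) : eqb_cl a b = true <-> a = b.
Proof. unfold eqb_cl. destruct (excluded_middle_informative (a = b)); split; intro; auto; try discriminate; contradiction. Qed.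

Lemma eqb_cl_iff {A B : Type} (a b : A) (c d : B) : (a = b <-> c = d) -> eqb_cl a b = eqb_cl c d.
Proof.
  intro H. unfold eqb_cl. destruct (excluded_middle_informative (a = b)), (excluded_middle_informative (c = d)); auto; tauto.
Qed.

Lemma conj_mul (W : Group) (a b u : W) : ginv b ** (ginv a ** u ** a) ** b = ginv (a ** b) ** u ** (a ** b).
Proof. rewrite inv_mul, !gmul_assoc. auto. Qed.

Definition sdmul (W : Group) (x y : W * (W -> bool)) : W * (W -> bool) :=
  (fst x ** fst y, fun u => xorb (snd x u) (snd y (ginv (fst x) ** u ** fst x))).

Definition SD (W : Group) : Group.
Proof.
  refine {| carrier := (W * (W -> bool))%type; gmul := sdmul W; gone := (gone, fun _ => false);
            ginv := fun x => (ginv (fst x), fun u => snd x (fst x ** u ** ginv (fst x))) |}.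
  - intros [a f] [b g] [c h]. unfold sdmul; simpl. f_equal. apply gmul_assoc.
    apply functional_extensionality; intro u. rewrite xorb_assoc. f_equal. f_equal. f_equal.
    apply conj_mul.
  - intros [a f]. unfold sdmul; simpl. f_equal. apply gmul_1l.
    apply functional_extensionality; intro u. rewrite inv_one, gmul_1l, gmul_1r. auto.
  - intros [a f]. unfold sdmul; simpl. f_equal. apply gmul_1r.
    apply functional_extensionality; intro u. apply xorb_false_r.
  - intros [a f]. unfold sdmul; simpl. f_equal. apply gmul_Vl.
    apply functional_extensionality; intro u. rewrite inv_inv. apply xorb_nilpotent.
  - intros [a f]. unfold sdmul; simpl. f_equal. apply gmul_Vr.
    apply functional_extensionality; intro u.
    replace (a ** (ginv a ** u ** a) ** ginv a) with u. apply xorb_nilpotent.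
    rewrite !gmul_assoc, gmul_Vr, gmul_1l, <- gmul_assoc, gmul_Vr, gmul_1r. auto.
Defined.

Fixpoint xs (P : nat -> bool) (n : nat) : bool :=
  match n with 0 => false | S k => xorb (P 0) (xs (fun j => P (S j)) k) end.

Lemma xs_ext P Q n : (forall j, P j = Q j) -> xs P n = xs Q n.
Proof. revert P Q; induction n; intros P Q H; simpl; auto. rewrite H. f_equal. apply IHn. auto. Qed.

Lemma xs_add P a b : xs P (a + b) = xorb (xs P a) (xs (fun j => P (a + j)) b).
Proof.
  revert P; induction a; intro P; simpl. apply xs_ext; auto.
  rewrite IHa, xorb_assoc. auto.
Qed.

Lemma xs_false n : xs (fun _ => false) n = false.
Proof. induction n; simpl; auto. Qed.

Lemma conj_iff (W : Group) (c u v : W) : ginv c ** u ** c = v <-> u = c ** v ** ginv c.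
Proof.
  split; intro H; subst.
  - rewrite !gmul_assoc, gmul_Vr, gmul_1l, <- gmul_assoc, gmul_Vr, gmul_1r. auto.
  - rewrite !gmul_assoc, gmul_Vl, gmul_1l, <- gmul_assoc, gmul_Vl, gmul_1r. auto.
Qed.

Lemma gpow_comm (W : Group) (a : W) j : gpow a j ** a = a ** gpow a j.
Proof. rewrite <- gpow_S_r. auto. Qed.

Lemma sd_rel (W : Group) (s t : W) n : s ** s = gone -> t ** t = gone -> gpow (s ** t) n = gone ->
  @gpow (SD W) (sdmul W (s, fun u => eqb_cl u s) (t, fun u => eqb_cl u t)) n = (gone, fun _ => false).
Proof.
  intros Hs Ht Hn.
  set (x := sdmul W (s, fun u => eqb_cl u s) (t, fun u => eqb_cl u t)).
  assert (Hs' : ginv s = s) by (apply inv_invol; auto).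
  assert (Ht' : ginv t = t) by (apply inv_invol; auto).
  assert (Hg' : ginv (s ** t) = t ** s) by (rewrite inv_mul, Hs', Ht'; auto).
  assert (C1 : forall k, fst (@gpow (SD W) x k) = gpow (s ** t) k).
  { induction k; simpl; auto. rewrite IHk. auto. }
  assert (C2 : forall k u, snd (@gpow (SD W) x k) u = xs (fun j => eqb_cl u (s ** gpow (t ** s) j)) (k + k)).
  { induction k; intro u; simpl; auto.
    rewrite Nat.add_succ_r. simpl. rewrite IHk. idtac.
    rewrite <- xorb_assoc. f_equal. f_equal. rewrite gmul_1r; auto.
    - apply eqb_cl_iff. rewrite conj_iff. rewrite Hs', gmul_1r.
      rewrite !gmul_assoc. tauto.
    - apply xs_ext. intro j. apply eqb_cl_iff. rewrite conj_iff.
      rewrite Hg', <- !gmul_assoc, gpow_comm, !gmul_assoc. tauto. }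
  assert (Hn' : gpow (t ** s) n = gone) by (rewrite <- Hg', gpow_inv, Hn, inv_one; auto).
  rewrite (surjective_pairing (@gpow (SD W) x n)). f_equal.
  - rewrite C1; auto.
  - apply functional_extensionality; intro u. rewrite C2, xs_add.
    erewrite (xs_ext (fun j => eqb_cl u (s ** gpow (t ** s) (n + j)))).
    apply xorb_nilpotent. intro j. rewrite gpow_add, Hn', gmul_1l. auto.
Qed.

Lemma hom_one (G H : Group) (phi : G -> H) : (forall a b, phi (a ** b) = phi a ** phi b) -> phi gone = gone.
Proof.
  intro Hm. apply (mul_cancel_l H (phi gone)). rewrite <- Hm, gmul_1l, gmul_1r. auto.
Qed.

Lemma cocycle (W : Group) (S : W -> Prop) (HW : coxeter_system W S) :
  exists n : W -> W -> bool,
    (forall a b u, n (a ** b) u = xorb (n a u) (n b (ginv a ** u ** a))) /\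
    (forall s u, S s -> n s u = eqb_cl u s) /\
    (forall u, n gone u = false).
Proof.
  pose proof HW as [Hinv [Hgen Hu]].
  destruct (Hu (SD W) (fun w => (w, fun u => eqb_cl u w))) as [phi [H1 H2]].
  - intros s t n Hs Ht Hn. apply sd_rel; auto. apply Hinv; auto. apply Hinv; auto.
  - assert (H0 : phi gone = gone) by (apply hom_one; auto).
    assert (Hf : forall w, fst (phi w) = w).
    { intro w. destruct (Hgen w) as [l [Hl <-]]. clear - H0 H1 H2 Hl.
      induction Hl; simpl. rewrite H0; auto.
      rewrite H1. simpl. rewrite IHHl, H2; auto. }
    exists (fun w => snd (phi w)). split; [|split].
    + intros a b u. rewrite H1. simpl. rewrite Hf. auto.
    + intros s u Hs. rewrite H2; auto.
    + intro u. rewrite H0. auto.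
Qed.

Lemma n_delete (W : Group) (S : W -> Prop) (HW : coxeter_system W S) (n : W -> W -> bool)
  (N1 : forall a b u, n (a ** b) u = xorb (n a u) (n b (ginv a ** u ** a)))
  (N2 : forall s u, S s -> n s u = eqb_cl u s) (N3 : forall u, n gone u = false) l :
  Forall S l -> forall u, n (wprod l) u = true ->
  exists l1 a l2, l = l1 ++ a :: l2 /\ u ** wprod l = wprod (l1 ++ l2).
Proof.
  induction 1 as [|a l Ha Hl IH]; intros u Hn; simpl in *.
  - rewrite N3 in Hn; discriminate.
  - rewrite N1, N2 in Hn by auto.
    assert (Hai : ginv a = a) by (apply inv_invol, (S_invol W S HW); auto).
    destruct (eqb_cl u a) eqn:E.
    + apply (proj1 (eqb_cl_spec _ _)) in E. subst u. exists nil, a, l. split; auto. simpl.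
      rewrite gmul_assoc, (S_invol W S HW a Ha), gmul_1l. auto.
    + simpl in Hn. destruct (IH _ Hn) as [l1 [b [l2 [-> Hp]]]].
      exists (a :: l1), b, l2. split; auto. simpl. rewrite <- Hp.
      rewrite Hai, !gmul_assoc, (S_invol W S HW a Ha), gmul_1l. auto.
Qed.

Lemma n_refl (W : Group) (S : W -> Prop) (HW : coxeter_system W S) (n : W -> W -> bool)
  (N1 : forall a b u, n (a ** b) u = xorb (n a u) (n b (ginv a ** u ** a)))
  (N2 : forall s u, S s -> n s u = eqb_cl u s) (N3 : forall u, n gone u = false) r :
  reflection W S r -> n r r = true.
Proof.
  intros [w [s [Hs ->]]].
  assert (E : n (w ** ginv w) (w ** s ** ginv w) = false) by (rewrite gmul_Vr; auto).
  assert (Q : ginv w ** (w ** s ** ginv w) ** w = s).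
  { rewrite !gmul_assoc, gmul_Vl, gmul_1l. apply mulKr'. }
  rewrite N1, Q in E. rewrite !N1. rewrite <- conj_mul, Q, gmul_Vl, gmul_1l, (N2 s) by auto.
  assert (T : eqb_cl s s = true) by (apply eqb_cl_spec; auto). rewrite T.
  destruct (n w (w ** s ** ginv w)), (n (ginv w) s); simpl in *; auto.
Qed.

Lemma strong_exchange (W : Group) (S : W -> Prop) (HW : coxeter_system W S) r w l :
  reflection W S r -> coxlen W S (r ** w) < coxlen W S w -> Forall S l -> wprod l = w ->
  exists l1 a l2, l = l1 ++ a :: l2 /\ r ** w = wprod (l1 ++ l2).
Proof.
  intros Hr Hlt Hl Hw.
  destruct (cocycle W S HW) as [n [N1 [N2 N3]]].
  assert (Hrr : r ** r = gone).
  { destruct Hr as [v [s [Hs ->]]].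
    rewrite <- !gmul_assoc, (gmul_assoc _ (ginv v) v), gmul_Vl, gmul_1l.
    rewrite (gmul_assoc _ s s), (S_invol W S HW s Hs), gmul_1l, gmul_Vr. auto. }
  assert (Hnw : n w r = true).
  { destruct (n w r) eqn:E; auto. exfalso.
    assert (E2 : n (r ** (r ** w)) r = false) by (rewrite gmul_assoc, Hrr, gmul_1l; auto).
    rewrite N1, (n_refl W S HW n N1 N2 N3 r Hr) in E2.
    rewrite (inv_invol _ r Hrr), <- gmul_assoc, Hrr, gmul_1r in E2. simpl in E2.
    apply negb_false_iff in E2.
    destruct (len_word W S HW (r ** w)) as [l' [Hl' [Hp Hn]]].
    rewrite <- Hp in E2.
    destruct (n_delete W S HW n N1 N2 N3 l' Hl' r E2) as [l1 [a [l2 [-> Hq]]]].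
    rewrite Hp, gmul_assoc, Hrr, gmul_1l in Hq.
    assert (Hle : coxlen W S w <= length (l1 ++ l2)) by (rewrite Hq; apply len_le; auto;
      apply Forall_app in Hl' as [A B]; inversion B; apply Forall_app; auto).
    rewrite length_app in *. simpl in Hn. lia. }
  rewrite <- Hw in Hnw. apply (n_delete W S HW n N1 N2 N3 l Hl r) in Hnw.
  rewrite Hw in Hnw. auto.
Qed.

Lemma refl_sq (W : Group) (S : W -> Prop) (HW : coxeter_system W S) r :
  reflection W S r -> r ** r = gone.
Proof.
  intros [v [s [Hs ->]]].
  rewrite <- !gmul_assoc, (gmul_assoc _ (ginv v) v), gmul_Vl, gmul_1l.
  rewrite (gmul_assoc _ s s), (S_invol W S HW s Hs), gmul_1l, gmul_Vr. auto.
Qed.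

Lemma refl_conj (W : Group) (S : W -> Prop) r w :
  reflection W S r -> reflection W S (w ** r ** ginv w).
Proof.
  intros [v [s [Hs ->]]]. exists (w ** v), s. split; auto.
  rewrite inv_mul, !gmul_assoc. auto.
Qed.

Lemma keyK (W : Group) (S : W -> Prop) (HW : coxeter_system W S) u w s :
  bruhat_step W S u w -> S s -> s ** u = w \/ coxlen W S (s ** u) < coxlen W S (s ** w).
Proof.
  intros [r [Hr [-> Hlt]]] Hs.
  destruct (lt_dec (coxlen W S (s ** u)) (coxlen W S (s ** (u ** r)))) as [H|H]; [right; auto|left].
  assert (Hne := len_neq_r W S HW r (s ** u) Hr). rewrite <- gmul_assoc in Hne.
  assert (H1 : coxlen W S (s ** (u ** r)) < coxlen W S (s ** u)) by lia.
  pose proof (len_Sl W S HW s u Hs) as H2.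
  set (w := u ** r) in *.
  assert (Hrr := refl_sq W S HW r Hr).
  assert (Hu : (w ** r ** ginv w) ** w = u).
  { rewrite mulKr'. unfold w. rewrite <- gmul_assoc, Hrr, gmul_1r. auto. }
  clearbody w.
  destruct (len_word W S HW (s ** w)) as [l [Hl [Hp Hn]]].
  assert (Hw : wprod (s :: l) = w) by (simpl; rewrite Hp, gmul_assoc, (S_invol W S HW s Hs), gmul_1l; auto).
  destruct (strong_exchange W S HW (w ** r ** ginv w) w (s :: l) (refl_conj W S r w Hr))
    as [l1 [a [l2 [E1 E2]]]]; auto. rewrite Hu; lia.
  rewrite Hu in E2.
  destruct l1 as [|b l1]; simpl in E1; injection E1 as E1a E1b.
  - simpl in E2. rewrite E2, <- E1b, Hp, gmul_assoc, (S_invol W S HW s Hs), gmul_1l. auto.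
  - exfalso. simpl in E2. rewrite E1b in Hl, Hn. rewrite <- E1a in E2. rewrite E2, gmul_assoc, (S_invol W S HW s Hs), gmul_1l in H1.
    assert (Hle : coxlen W S (wprod (l1 ++ l2)) <= length (l1 ++ l2)).
    { apply len_le; auto. apply Forall_app in Hl as [A B]. inversion B. apply Forall_app; auto. }
    rewrite length_app in *. simpl in Hn. lia.
Qed.

Lemma step_desc (W : Group) (S : W -> Prop) (HW : coxeter_system W S) s w :
  S s -> coxlen W S (s ** w) < coxlen W S w -> bruhat W S (s ** w) w.
Proof.
  intros Hs Hlt. apply rt_step. exists (ginv w ** s ** w). split; [|split]; auto.
  - exists (ginv w), s. split; auto. rewrite inv_inv; auto.
  - rewrite !gmul_assoc, <- (gmul_assoc _ s w), gmul_Vr, gmul_1r, (S_invol W S HW s Hs), gmul_1l. auto.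
Qed.

Lemma step_left (W : Group) (S : W -> Prop) s x y :
  bruhat_step W S x y -> coxlen W S (s ** x) < coxlen W S (s ** y) -> bruhat_step W S (s ** x) (s ** y).
Proof.
  intros [r [Hr [-> _]]] Hlt. exists r. split; auto. split; auto. apply gmul_assoc.
Qed.

Lemma liftH (W : Group) (S : W -> Prop) (HW : coxeter_system W S) s u w :
  S s -> bruhat W S u w -> bruhat W S (s ** u) w \/ bruhat W S (s ** u) (s ** w).
Proof.
  intros Hs Hb. apply clos_rt_rt1n in Hb. induction Hb as [|x y z Hxy Hyz IH].
  - right. apply rt_refl.
  - destruct (keyK W S HW x y s Hxy Hs) as [E|L].
    + left. rewrite E. apply clos_rt1n_rt; auto.
    + assert (St : bruhat W S (s ** x) (s ** y)) by (apply rt_step, step_left; auto).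
      destruct IH as [I|I]; [left|right]; eapply rt_trans; eauto.
Qed.

Lemma liftB (W : Group) (S : W -> Prop) (HW : coxeter_system W S) s u w :
  S s -> coxlen W S (s ** w) < coxlen W S w -> bruhat W S u w -> bruhat W S (s ** u) w.
Proof.
  intros Hs Hlt Hb. destruct (liftH W S HW s u w Hs Hb) as [I|I]; auto.
  eapply rt_trans; eauto. apply step_desc; auto.
Qed.

Lemma liftA (W : Group) (S : W -> Prop) (HW : coxeter_system W S) s u x :
  S s -> bruhat W S u x -> coxlen W S (s ** x) < coxlen W S x ->
  (coxlen W S (s ** u) < coxlen W S u -> bruhat W S (s ** u) (s ** x)) /\
  (coxlen W S u < coxlen W S (s ** u) -> bruhat W S u (s ** x)).
Proof.
  intros Hs Hb. apply clos_rt_rtn1 in Hb. induction Hb as [|y z Hyz Hrt IH]; intro Hlt.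
  - split; intro; [apply rt_refl | lia].
  - assert (Hss : forall v, s ** (s ** v) = v) by
      (intro v; rewrite gmul_assoc, (S_invol W S HW s Hs), gmul_1l; auto).
    assert (Huy : bruhat W S u y) by (apply clos_rtn1_rt; auto).
    assert (Hsu : coxlen W S (s ** u) < coxlen W S u -> bruhat W S (s ** u) u) by
      (intro; apply step_desc; auto).
    destruct (keyK W S HW y z s Hyz Hs) as [E|L].
    + rewrite <- E, Hss. split; intro; auto. apply rt_trans with (y := u); [apply Hsu; auto | exact Huy].
    + assert (St : bruhat W S (s ** y) (s ** z)) by (apply rt_step, step_left; auto).
      assert (Hne := len_neq_l W S HW s y (S_refl W S s Hs)).
      destruct (lt_dec (coxlen W S (s ** y)) (coxlen W S y)) as [D|D].
      * destruct (IH D) as [I1 I2]. split; intro.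
        apply rt_trans with (y := s ** y); [apply I1; auto | exact St].
        apply rt_trans with (y := s ** y); [apply I2; auto | exact St].
      * assert (Hy : bruhat W S y (s ** y)).
        { pattern y at 1; rewrite <- (Hss y). apply step_desc; auto. rewrite Hss. lia. }
        assert (Huz : bruhat W S u (s ** z)) by
          (apply rt_trans with (y := y); [exact Huy | apply rt_trans with (y := s ** y); [exact Hy | exact St]]).
        split; intro; auto. apply rt_trans with (y := u); [apply Hsu; auto | exact Huz].
Qed.

Lemma inv_step (W : Group) (S : W -> Prop) (HW : coxeter_system W S) u v :
  bruhat_step W S u v -> bruhat_step W S (ginv u) (ginv v).
Proof.
  intros [r [Hr [-> Hlt]]]. exists (u ** r ** ginv u). split; [|split].
  - apply refl_conj; auto.
  - rewrite inv_mul, (inv_invol _ r (refl_sq W S HW r Hr)). rewrite !gmul_assoc, gmul_Vl, gmul_1l. auto.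
  - rewrite !(len_inv W S HW). auto.
Qed.

Lemma inv_bruhat (W : Group) (S : W -> Prop) (HW : coxeter_system W S) u v :
  bruhat W S u v -> bruhat W S (ginv u) (ginv v).
Proof.
  induction 1. apply rt_step, inv_step; auto. apply rt_refl. eapply rt_trans; eauto.
Qed.

Lemma liftB_r (W : Group) (S : W -> Prop) (HW : coxeter_system W S) t u y :
  S t -> coxlen W S (y ** t) < coxlen W S y -> bruhat W S u y -> bruhat W S (u ** t) y.
Proof.
  intros Ht Hlt Hb.
  assert (Hti : ginv t = t) by (apply inv_invol, (S_invol W S HW); auto).
  apply inv_bruhat in Hb; auto.
  assert (E1 : t ** ginv y = ginv (y ** t)) by (rewrite inv_mul, Hti; auto).
  assert (L : coxlen W S (t ** ginv y) < coxlen W S (ginv y)) by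
    (rewrite E1, !(len_inv W S HW); auto).
  assert (H := liftB W S HW t (ginv u) (ginv y) Ht L Hb).
  apply inv_bruhat in H; auto.
  rewrite inv_mul, Hti, !inv_inv in H. auto.
Qed.

Lemma case1 (W : Group) (S : W -> Prop) (HW : coxeter_system W S) (x y s t : W) (Hs : S s) (Ht : S t)
  (Hy : y = gmul (gmul s x) t) (Hl : coxlen W S x = coxlen W S y)
  (x' : W) (Hx' : bruhat W S x' x) (Hlt : coxlen W S (s ** x) < coxlen W S x) :
  bruhat W S x' y \/
  (bruhat W S (gmul (gmul s x') t) y /\
   coxlen W S (gmul (gmul s x') t) <= coxlen W S x').
Proof.
  assert (Hyt : y ** t = s ** x) by (rewrite Hy, <- gmul_assoc, (S_invol W S HW t Ht), gmul_1r; auto).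
  assert (L1 : coxlen W S (y ** t) < coxlen W S y) by (rewrite Hyt; lia).
  assert (Hsxy : bruhat W S (s ** x) y).
  { apply rt_step. exists t. split; [apply S_refl; auto|]. split; auto. lia. }
  destruct (liftA W S HW s x' x Hs Hx' Hlt) as [A1 A2].
  assert (Hne := len_neq_l W S HW s x' (S_refl W S s Hs)).
  destruct (lt_dec (coxlen W S (s ** x')) (coxlen W S x')) as [D|D].
  - right. split.
    + apply liftB_r; auto. apply rt_trans with (y := s ** x); [apply A1; auto | exact Hsxy].
    + pose proof (len_Sr W S HW t (s ** x') Ht). lia.
  - left. apply rt_trans with (y := s ** x); [apply A2; lia | exact Hsxy].
Qed.

Theorem lemma3p3 (W : Group) (S : W -> Prop) (HW : coxeter_system W S)
  (x y s t : W) (Hs : S s) (Ht : S t)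
  (Hy : y = gmul (gmul s x) t)
  (Hl : coxlen W S x = coxlen W S y)
  (x' : W) (Hx' : bruhat W S x' x) :
  bruhat W S x' y \/
  (bruhat W S (gmul (gmul s x') t) y /\
   coxlen W S (gmul (gmul s x') t) <= coxlen W S x').
Proof.
  destruct (lt_dec (coxlen W S (s ** x)) (coxlen W S x)) as [D1|D1].
  { apply case1 with x; auto. }
  assert (Hsi : ginv s = s) by (apply inv_invol, (S_invol W S HW); auto).
  assert (Hti : ginv t = t) by (apply inv_invol, (S_invol W S HW); auto).
  assert (Hne := len_neq_l W S HW s x (S_refl W S s Hs)).
  destruct (lt_dec (coxlen W S (x ** t)) (coxlen W S x)) as [D2|D2].
  - assert (C := case1 W S HW (ginv x) (ginv y) t s Ht Hs).
    assert (C1 : ginv y = t ** ginv x ** s) by (rewrite Hy, !inv_mul, Hsi, Hti, !gmul_assoc; auto).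
    assert (C2 : coxlen W S (ginv x) = coxlen W S (ginv y)) by (rewrite !(len_inv W S HW); auto).
    assert (C3 : coxlen W S (t ** ginv x) < coxlen W S (ginv x)) by
      (rewrite <- Hti, <- inv_mul, !(len_inv W S HW); auto).
    destruct (C C1 C2 (ginv x') (inv_bruhat W S HW _ _ Hx') C3) as [I|[I1 I2]].
    + left. apply inv_bruhat in I; auto. rewrite !inv_inv in I. auto.
    + right. apply inv_bruhat in I1; auto.
      assert (E : ginv (t ** ginv x' ** s) = s ** x' ** t) by
        (rewrite !inv_mul, Hsi, Hti, inv_inv, !gmul_assoc; auto).
      rewrite E, inv_inv in I1. split; auto.
      rewrite <- E, (len_inv W S HW), (len_inv W S HW) in *. auto.
  - left. apply rt_trans with (y := x); [exact Hx'|].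
    assert (Hne2 := len_neq_r W S HW t x (S_refl W S t Ht)).
    assert (Hxt : bruhat W S x (x ** t)).
    { apply rt_step. exists t. split; [apply S_refl; auto|]. split; auto. lia. }
    assert (Ey : s ** (x ** t) = y) by (rewrite Hy, gmul_assoc; auto).
    destruct (liftA W S HW s x (x ** t) Hs Hxt) as [_ A2].
    + rewrite Ey. lia.
    + rewrite <- Ey. apply A2. lia.
Qed.
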